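(* Consider a radial three-phase distribution grid modeled by a tree on buses $\{0,1,\ldots,N\}$ with feeder bus $0$, where every bus $n\in\{1,\ldots,N\}$ has a unique parent bus $\pi_n<n$; line $n$ connects $\pi_n$ and $n$, and $\mathcal{C}_n$ denotes the set of children of bus $n$. For each line $n$ let $\mathbf{Z}_n=\mathbf{Z}_n^{\top}\in\mathbb{C}^{3\times 3}$ be its phase impedance matrix and define $\tilde{\mathbf{Z}}_n:=\operatorname{diag}(\boldsymbol{\alpha}^* )\mathbf{Z}_n\operatorname{diag}(\boldsymbol{\alpha})$, where $\boldsymbol{\alpha}:=[1~\alpha~\alpha^2]^{\top}$ and $\alpha=e^{-j2\pi/3}$. Let $\mathbf{s}_n=\mathbf{p}_n+j\mathbf{q}_n\in\mathbb{C}^3$ (with $\mathbf{p}_n,\mathbf{q}_n\in\mathbb{R}^3$), $\mathbf{v}_n\in\mathbb{R}^3$ and $\mathbf{S}_n\in\mathbb{C}^3$, $n=1,\ldots,N$, satisfy for all $n\in\{1,\ldots,N\}$ \[\mathbf{s}_n=\sum_{k\in\mathcal{C}_n}\mathbf{S}_k-\mathbf{S}_n,\qquad \mathbf{v}_{\pi_n}-\mathbf{v}_n=2\,\mathrm{Re}\big[\tilde{\mathbf{Z}}_n^*\mathbf{S}_n\big],\] where $\mathbf{v}_0:=v_0\mathbf{1}_3$ for a scalar $v_0$, $^*$ denotes entrywise complex conjugation and $\mathrm{Re}$ is taken entrywise. Stack $\mathbf{v}:=[\mathbf{v}_1^{\top}\cdots\mathbf{v}_N^{\top}]^{\top}$,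 $\mathbf{p}:=[\mathbf{p}_1^{\top}\cdots\mathbf{p}_N^{\top}]^{\top}$, $\mathbf{q}:=[\mathbf{q}_1^{\top}\cdots\mathbf{q}_N^{\top}]^{\top}\in\mathbb{R}^{3N}$. Then \[\mathbf{v}=\mathbf{R}\mathbf{p}+\mathbf{X}\mathbf{q}+v_0\mathbf{1}_{3N},\] where $\mathbf{R}:=2\mathbf{M}\,\mathrm{bdiag}(\{\mathrm{Re}[\tilde{\mathbf{Z}}_n]\})\mathbf{M}^{\top}$, $\mathbf{X}:=2\mathbf{M}\,\mathrm{bdiag}(\{\mathrm{Im}[\tilde{\mathbf{Z}}_n]\})\mathbf{M}^{\top}$ and $\mathbf{M}:=\mathbf{T}(\mathbf{I}_3\otimes\mathbf{F})\mathbf{T}^{\top}$.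
   Context: The reduced branch-bus incidence matrix $\mathbf{A}\in\mathbb{R}^{N\times N}$ is obtained from the full branch-bus incidence matrix $\tilde{\mathbf{A}}=[\mathbf{a}_0~\mathbf{A}]\in\mathbb{R}^{N\times(N+1)}$ (rows indexed by lines, columns by buses $0,\ldots,N$), whose row $n$ has entry $+1$ in column $\pi_n$, entry $-1$ in column $n$, and zeros elsewhere, by deleting the column $\mathbf{a}_0$ of bus $0$. The matrix $\mathbf{F}:=-\mathbf{A}^{-1}$. $\mathrm{bdiag}(\{\mathbf{Y}_n\})$ is the block diagonal matrix with blocks $\mathbf{Y}_1,\ldots,\mathbf{Y}_N$. The permutation matrix $\mathbf{T}\in\mathbb{R}^{3N\times 3N}$ is $\mathbf{T}:=[\mathbf{I}_3\otimes\mathbf{e}_1^{\top};\ \ldots;\ \mathbf{I}_3\otimes\mathbf{e}_N^{\top}]$ (blocks stacked vertically), where $\mathbf{e}_n$ is the $n$-th column of $\mathbf{I}_N$; it maps a vector stacked per phase (all buses of phase $a$, then $b$, then $c$) to the same vector stacked per bus. *)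

(* Defs.v *)
From HB Require Import structures.
From mathcomp Require Import all_boot all_order all_algebra.
From mathcomp Require Import complex mxtens.
Set Implicit Arguments. Unset Strict Implicit. Unset Printing Implicit Defensive.
Import Order.TTheory GRing.Theory Num.Theory.
Local Open Scope ring_scope.
Local Open Scope complex_scope.

(* Conventions: buses are 'I_N.+1 with ord0 the feeder bus 0; line/bus n in
   {1..N} of the paper is represented by n : 'I_N, i.e. bus (lift ord0 n)
   (value n+1).  par n : 'I_N.+1 is the parent bus pi_{n+1}.
   Stacked vectors in R^{3N} use index (bus, phase) |-> bus*3 + phase
   ("per bus"), i.e. type 'I_(N*3); per-phase stacking is phase*N + bus,
   type 'I_(3*N).  These are the Kronecker index conventions of mxtens. *)

Section Defs.
Variable R : rcfType.

(* alpha = e^{-j 2 pi / 3} = -1/2 - j sqrt(3)/2 *)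
Definition alpha : R[i] := (- (1 / 2)) +i* (- (Num.sqrt 3 / 2)).
Definition alphavec : 'cV[R[i]]_3 := \col_(k < 3) alpha ^+ k.
Definition cconj_mx m n (A : 'M[R[i]]_(m, n)) := map_mx (@conjc R) A.
Definition Re_mx m n (A : 'M[R[i]]_(m, n)) : 'M[R]_(m, n) := map_mx (@complex.Re R) A.
Definition Im_mx m n (A : 'M[R[i]]_(m, n)) : 'M[R]_(m, n) := map_mx (@complex.Im R) A.
Definition diagc (x : 'cV[R[i]]_3) : 'M[R[i]]_3 := diag_mx x^T.
Definition Ztilde (Z : 'M[R[i]]_3) : 'M[R[i]]_3 :=
  diagc (cconj_mx alphavec) *m Z *m diagc alphavec.

(* full branch-bus incidence matrix [a0 A], rows = lines, columns = buses 0..N *)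
Definition incid_full N (par : 'I_N -> 'I_N.+1) : 'M[R]_(N, N.+1) :=
  \matrix_(n, b) ((b == par n)%:R - (b == lift ord0 n)%:R).
Definition incid_red N (par : 'I_N -> 'I_N.+1) : 'M[R]_N :=
  col' ord0 (incid_full par).
Definition Fmx N (par : 'I_N -> 'I_N.+1) : 'M[R]_N := - invmx (incid_red par).

(* T = [I_3 (x) e_1^T; ...; I_3 (x) e_N^T]: row k of block n is row k of
   I_3 (x) e_n^T (whose row index in 'I_(3*1) is mxtens_index (k, 0)). *)
Definition Tblock N (n : 'I_N) : 'M[R]_(3 * 1, 3 * N) :=
  (1%:M : 'M[R]_3) *t (delta_mx 0 n : 'rV[R]_N).
Definition Tmx N : 'M[R]_(N * 3, 3 * N) :=
  \matrix_(r, c) Tblock (mxtens_unindex r).1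
                        (mxtens_index ((mxtens_unindex r).2, ord0)) c.

Definition Mmx N (par : 'I_N -> 'I_N.+1) : 'M[R]_(N * 3) :=
  Tmx N *m ((1%:M : 'M[R]_3) *t Fmx par) *m (Tmx N)^T.

Definition bdiag N (B : 'I_N -> 'M[R]_3) : 'M[R]_(N * 3) :=
  \sum_(n < N) ((delta_mx n n : 'M[R]_N) *t B n).

Definition Rmx N (par : 'I_N -> 'I_N.+1) (Z : 'I_N -> 'M[R[i]]_3) : 'M[R]_(N * 3) :=
  2%:R *: (Mmx par *m bdiag (fun n => Re_mx (Ztilde (Z n))) *m (Mmx par)^T).
Definition Xmx N (par : 'I_N -> 'I_N.+1) (Z : 'I_N -> 'M[R[i]]_3) : 'M[R]_(N * 3) :=
  2%:R *: (Mmx par *m bdiag (fun n => Im_mx (Ztilde (Z n))) *m (Mmx par)^T).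

Definition stack N (x : 'I_N -> 'cV[R]_3) : 'cV[R]_(N * 3) :=
  \col_(r < N * 3) x (mxtens_unindex r).1 (mxtens_unindex r).2 0.

Definition busv N (v0 : R) (v : 'I_N -> 'cV[R]_3) (b : 'I_N.+1) : 'cV[R]_3 :=
  match unlift ord0 b with Some m => v m | None => v0 *: const_mx 1 end.

Definition cplx_of m n (A : 'M[R]_(m, n)) : 'M[R[i]]_(m, n) := map_mx (fun x => x%:C) A.
Definition jC : R[i] := Complex 0 1.
End Defs.

(* Main.v *)
Require Import Defs.
From HB Require Import structures.
From mathcomp Require Import all_boot all_order all_algebra.
From mathcomp Require Import complex mxtens.
From mathcomp Require Import zify ring lra.
Import Order.TTheory GRing.Theory Num.Theory.
Local Open Scope ring_scope.
Local Open Scope complex_scope.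

Lemma Tmx_entry (R : rcfType) N (r : 'I_(N * 3)) (c : 'I_(3 * N)) :
  Tmx R N r c = (c == mxtens_index ((mxtens_unindex r).2, (mxtens_unindex r).1))%:R.
Proof.
case: (mxtens_indexP r) => n k; case: (mxtens_indexP c) => ph m.
rewrite /Tmx mxE !mxtens_indexK /= /Tblock tensmxE !mxE.
rewrite (inj_eq (can_inj (@mxtens_indexK _ _))) xpair_eqE [k == ph]eq_sym eqxx /=.
by case: (ph == k); case: (m == n); rewrite /= ?mulr1n ?mul1r ?mulr0n ?mul0r.
Qed.

Lemma Tmul (R : rcfType) N p (Y : 'M[R]_(3 * N, p)) r j :
  (Tmx R N *m Y) r j = Y (mxtens_index ((mxtens_unindex r).2, (mxtens_unindex r).1)) j.
Proof.
rewrite mxE (bigD1 (mxtens_index ((mxtens_unindex r).2, (mxtens_unindex r).1))) //=.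
rewrite Tmx_entry eqxx mul1r big1 ?addr0 // => c /negbTE Hc.
by rewrite Tmx_entry Hc mul0r.
Qed.

Lemma mulT (R : rcfType) N p (Y : 'M[R]_(p, 3 * N)) i r :
  (Y *m (Tmx R N)^T) i r = Y i (mxtens_index ((mxtens_unindex r).2, (mxtens_unindex r).1)).
Proof.
rewrite mxE (bigD1 (mxtens_index ((mxtens_unindex r).2, (mxtens_unindex r).1))) //=.
rewrite mxE Tmx_entry eqxx mulr1 big1 ?addr0 // => c /negbTE Hc.
by rewrite mxE Tmx_entry Hc mulr0.
Qed.

Lemma Mmx_tens (R : rcfType) N (par : 'I_N -> 'I_N.+1) :
  Mmx R par = Fmx R par *t (1%:M : 'M[R]_3).
Proof.
apply/matrixP => r c; rewrite /Mmx mulT Tmul.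
case: (mxtens_indexP r) => n k; case: (mxtens_indexP c) => n' k'.
by rewrite !mxtens_indexK /= !tensmxE mulrC.
Qed.

Lemma sum_tens (R : rcfType) m n (F : 'I_(m * n) -> R) :
  \sum_k F k = \sum_(i < m) \sum_(j < n) F (mxtens_index (i, j)).
Proof.
rewrite (reindex (@mxtens_index m n)) /=; last first.
  by exists (@mxtens_unindex m n) => ? _; [apply: mxtens_indexK | apply: mxtens_unindexK].
rewrite pair_big /=; apply: eq_bigr => -[i j] _ //.
Qed.

Lemma stackE (R : rcfType) N (x : 'I_N -> 'cV[R]_3) n k j :
  stack x (mxtens_index (n, k)) j = x n k 0.
Proof. by rewrite mxE mxtens_indexK. Qed.

Lemma tens1_stack (R : rcfType) N (A : 'M[R]_N) (x : 'I_N -> 'cV[R]_3) :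
  (A *t (1%:M : 'M[R]_3)) *m stack x = stack (fun n => \sum_m A n m *: x m).
Proof.
apply/matrixP => r j; case: (mxtens_indexP r) => n k.
rewrite stackE summxE mxE sum_tens; apply: eq_bigr => m _.
rewrite (bigD1 k) //= tensmxE stackE !mxE eqxx mulr1n mulr1 big1 ?addr0 // => l /negbTE Hl.
by rewrite tensmxE !mxE eq_sym Hl mulr0n mulr0 mul0r.
Qed.

Lemma bdiag_stack (R : rcfType) N (B : 'I_N -> 'M[R]_3) (x : 'I_N -> 'cV[R]_3) :
  bdiag B *m stack x = stack (fun n => B n *m x n).
Proof.
apply/matrixP => r j; case: (mxtens_indexP r) => n k.
rewrite stackE mxE sum_tens (bigD1 n) //= [X in _ + X]big1 ?addr0; last first.
  move=> m /negbTE Hm; apply: big1 => l _.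
  rewrite /bdiag summxE big1 ?mul0r // => i _.
  by rewrite tensmxE !mxE; case: (n =P i) => [<-|_] /=; rewrite ?Hm ?mul0r.
rewrite mxE; apply: eq_bigr => l _.
rewrite stackE /bdiag summxE (bigD1 n) //= big1 ?addr0; last first.
  by move=> i /negbTE Hi; rewrite tensmxE !mxE [n == i]eq_sym Hi /= mul0r.
by rewrite tensmxE !mxE !eqxx /= mul1r.
Qed.

Lemma incidE (R : rcfType) N (par : 'I_N -> 'I_N.+1) n m :
  incid_red R par n m = (lift ord0 m == par n)%:R - (m == n)%:R.
Proof. by rewrite /incid_red !mxE (inj_eq (@lift_inj _ ord0)). Qed.

Lemma incid_unit (R : rcfType) N (par : 'I_N -> 'I_N.+1)
  (Hpar : forall n : 'I_N, (par n <= n)%N) : incid_red R par \in unitmx.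
Proof.
rewrite unitmxE unitfE det_trig; last first.
  apply/is_trig_mxP => i j Hij; rewrite incidE.
  have -> : (lift ord0 j == par i) = false.
    apply/negbTE/eqP => E; have := Hpar i; rewrite -E /= /bump /=.
    lia.
  have -> : (j == i) = false by apply/negbTE; rewrite neq_ltn Hij orbT.
  by rewrite subrr.
rewrite prodf_seq_neq0; apply/allP => i _ /=.
rewrite incidE eqxx.
have -> : (lift ord0 i == par i) = false.
  apply/negbTE/eqP => E; have := Hpar i; rewrite -E /= /bump /=; lia.
by rewrite sub0r oppr_eq0 oner_eq0.
Qed.

Lemma sum_delta (R : rcfType) (I : finType) (i : I) (f : I -> R) :
  \sum_m (m == i)%:R * f m = f i.
Proof.
rewrite (bigD1 i) //= eqxx mul1r big1 ?addr0 // => m /negbTE ->.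
by rewrite mul0r.
Qed.

Lemma volt_solve (R : rcfType) N (par : 'I_N -> 'I_N.+1)
  (Hpar : forall n : 'I_N, (par n <= n)%N) v0 (v : 'I_N -> 'cV[R]_3) n :
  v n - v0 *: const_mx 1 =
  \sum_m invmx (incid_red R par) n m *: (busv v0 v (par m) - v m).
Proof.
set A := incid_red R par.
pose X : 'M[R]_(N, 3) := \matrix_(m, k) (v m - v0 *: const_mx 1) k 0.
pose W : 'M[R]_(N, 3) := \matrix_(m, k) (busv v0 v (par m) - v m) k 0.
have HAX : A *m X = W.
  apply/matrixP => i k; rewrite !mxE.
  under eq_bigr => m _ do rewrite incidE mulrBl.
  rewrite sumrB sum_delta /busv; case: unliftP => [j ->|->].
    under eq_bigr => m _ do rewrite (inj_eq (@lift_inj _ ord0)).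
    by rewrite (@sum_delta R _ j (fun m => X m k)) !mxE; ring.
  rewrite big1; last by move=> m _; rewrite eq_sym (negbTE (neq_lift _ _)) mul0r.
  by rewrite !mxE; ring.
have HX : X = invmx A *m W by rewrite -HAX mulKmx // incid_unit.
apply/matrixP => k j; rewrite [j]ord1.
have := congr1 (fun M : 'M[R]_(N,3) => M n k) HX; rewrite /= !mxE => ->.
by rewrite summxE; apply: eq_bigr => m _; rewrite !mxE.
Qed.

Lemma Re_sum (R : rcfType) (I : Type) (r : seq I) (P : pred I) (F : I -> R[i]) :
  complex.Re (\sum_(i <- r | P i) F i) = \sum_(i <- r | P i) complex.Re (F i).
Proof. by apply: (big_morph _ (fun x y => _) (erefl _)) => -[a b] [c d]. Qed.

Lemma Im_sum (R : rcfType) (I : Type) (r : seq I) (P : pred I) (F : I -> R[i]) :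
  complex.Im (\sum_(i <- r | P i) F i) = \sum_(i <- r | P i) complex.Im (F i).
Proof. by apply: (big_morph _ (fun x y => _) (erefl _)) => -[a b] [c d]. Qed.

Lemma ReB (R : rcfType) (x y : R[i]) : complex.Re (x - y) = complex.Re x - complex.Re y.
Proof. by case: x; case: y. Qed.
Lemma ImB (R : rcfType) (x y : R[i]) : complex.Im (x - y) = complex.Im x - complex.Im y.
Proof. by case: x; case: y. Qed.

Lemma flow_Re (R : rcfType) (a b : 'cV[R]_3) k :
  complex.Re ((cplx_of a + jC R *: cplx_of b) k 0) = a k 0.
Proof. rewrite !mxE /jC /=; ring. Qed.
Lemma flow_Im (R : rcfType) (a b : 'cV[R]_3) k :
  complex.Im ((cplx_of a + jC R *: cplx_of b) k 0) = b k 0.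
Proof. rewrite !mxE /jC /=; ring. Qed.

Lemma flow_solve (R : rcfType) N (par : 'I_N -> 'I_N.+1)
  (Hpar : forall n : 'I_N, (par n <= n)%N) (S : 'I_N -> 'cV[R[i]]_3)
  (f : R[i] -> R) (x : 'I_N -> 'cV[R]_3)
  (fsum : forall (P : pred 'I_N) (F : 'I_N -> R[i]),
      f (\sum_(i < N | P i) F i) = \sum_(i < N | P i) f (F i))
  (fB : forall a b, f (a - b) = f a - f b)
  (H : forall n k, x n k 0 = f ((\sum_(k' < N | par k' == lift ord0 n) S k' - S n) k 0)) m :
  map_mx f (S m) = \sum_m' invmx (incid_red R par) m' m *: x m'.
Proof.
set A := incid_red R par.
pose Y : 'M[R]_(N, 3) := \matrix_(m, k) f (S m k 0).
pose P : 'M[R]_(N, 3) := \matrix_(m, k) x m k 0.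
have HAY : A^T *m Y = P.
  apply/matrixP => i k; rewrite !mxE H !mxE fB summxE fsum.
  under eq_bigr => n _ do rewrite [A^T _ _]mxE /A incidE /Y mxE mulrBl.
  rewrite sumrB [X in _ - X](eq_bigr (fun n => (n == i)%:R * f (S n k 0))); last first.
    by move=> n _; rewrite eq_sym.
  rewrite sum_delta; congr (_ - _).
  rewrite [RHS]big_mkcond /=; apply: eq_bigr => n _.
  by rewrite eq_sym; case: (_ == _); rewrite ?mul1r ?mul0r.
have HY : Y = (invmx A)^T *m P.
  by rewrite -HAY trmx_inv mulKmx // unitmx_tr incid_unit.
apply/matrixP => k j; rewrite [j]ord1.
have := congr1 (fun M : 'M[R]_(N,3) => M m k) HY; rewrite /= !mxE => ->.
by rewrite summxE; apply: eq_bigr => n _; rewrite !mxE.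
Qed.

Lemma Re_conj_mul (R : rcfType) (Zt : 'M[R[i]]_3) (x : 'cV[R[i]]_3) :
  Re_mx (cconj_mx Zt *m x) = Re_mx Zt *m Re_mx x + Im_mx Zt *m Im_mx x.
Proof.
apply/matrixP => k j; rewrite !mxE Re_sum -big_split /=; apply: eq_bigr => l _.
rewrite !mxE; case: (Zt k l) => a b; case: (x l j) => c d /=; ring.
Qed.

Lemma stack_ext (R : rcfType) N (f g : 'I_N -> 'cV[R]_3) :
  (forall n, f n = g n) -> stack f = stack g.
Proof. by move=> H; apply/matrixP => r j; rewrite !mxE H. Qed.
Lemma stackD (R : rcfType) N (f g : 'I_N -> 'cV[R]_3) :
  stack f + stack g = stack (fun n => f n + g n).
Proof. by apply/matrixP => r j; rewrite !mxE. Qed.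
Lemma stackZ (R : rcfType) N (a : R) (f : 'I_N -> 'cV[R]_3) :
  a *: stack f = stack (fun n => a *: f n).
Proof. by apply/matrixP => r j; rewrite !mxE. Qed.
Lemma stackC (R : rcfType) N (a : R) :
  a *: (const_mx 1 : 'cV[R]_(N * 3)) = stack (fun _ : 'I_N => a *: const_mx 1).
Proof. by apply/matrixP => r j; rewrite !mxE. Qed.

Theorem proposition2 (R : rcfType) (N : nat) (par : 'I_N -> 'I_N.+1)
  (Hpar : forall n : 'I_N, (par n <= n)%N)
  (Z : 'I_N -> 'M[R[i]]_3) (HZ : forall n, (Z n)^T = Z n)
  (p q v : 'I_N -> 'cV[R]_3) (v0 : R) (S : 'I_N -> 'cV[R[i]]_3)
  (Hflow : forall n : 'I_N,
     cplx_of (p n) + jC R *: cplx_of (q n)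
     = \sum_(k < N | par k == lift ord0 n) S k - S n)
  (Hvolt : forall n : 'I_N,
     busv v0 v (par n) - v n
     = 2%:R *: Re_mx (cconj_mx (Ztilde (Z n)) *m S n)) :
  stack v = Rmx par Z *m stack p + Xmx par Z *m stack q
            + v0 *: (const_mx 1 : 'cV[R]_(N * 3)).
Proof.
set F := Fmx R par.
have invA : invmx (incid_red R par) = - F by rewrite /F /Fmx opprK.
pose P' m := \sum_m' F^T m m' *: p m'.
pose Q' m := \sum_m' F^T m m' *: q m'.
have HRe m : Re_mx (S m) = - P' m.
  rewrite /Re_mx (@flow_solve R N par Hpar S (@complex.Re R) p).
  - rewrite invA /P' -sumrN; apply: eq_bigr => m' _; rewrite !mxE scaleNr //.
  - by move=> P0 F0; rewrite Re_sum.
  - exact: ReB.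
  - by move=> n k; rewrite -Hflow flow_Re.
have HIm m : Im_mx (S m) = - Q' m.
  rewrite /Im_mx (@flow_solve R N par Hpar S (@complex.Im R) q).
  - rewrite invA /Q' -sumrN; apply: eq_bigr => m' _; rewrite !mxE scaleNr //.
  - by move=> P0 F0; rewrite Im_sum.
  - exact: ImB.
  - by move=> n k; rewrite -Hflow flow_Im.
have key n : v n =
    2%:R *: (\sum_m F n m *: (Re_mx (Ztilde (Z m)) *m P' m))
  + 2%:R *: (\sum_m F n m *: (Im_mx (Ztilde (Z m)) *m Q' m))
  + v0 *: const_mx 1.
  apply/eqP; rewrite -subr_eq; apply/eqP; rewrite (@volt_solve R N par Hpar) invA.
  under eq_bigr => m _ do rewrite [(- F) _ _]mxE Hvolt Re_conj_mul HRe HIm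
    !mulmxN -opprD scaleNr !scalerN opprK scalerA mulrC -scalerA scalerDr.
  by rewrite -scaler_sumr big_split /= scalerDr.
rewrite /Rmx /Xmx !Mmx_tens -!scalemxAl -!mulmxA trmx_tens tr_scalar_mx.
rewrite tens1_stack bdiag_stack tens1_stack tens1_stack bdiag_stack tens1_stack.
rewrite !stackZ stackD stackC stackD; apply: stack_ext => n.
by rewrite key.
Qed.
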